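(* Define $\alpha,\beta:[0,2\pi]\to\mathbb{R}^3$ and $\gamma:[0,\pi]\to\mathbb{R}^3$ by $\alpha(t)=(\cos t,\sin t,1)$, $\beta(t)=(\cos t,\sin t,-1)$, $\gamma(t)=\big(2\cos(2t)-1,\ 2\sin(2t),\ \tfrac98\cos t-\tfrac18\cos(3t)\big)$, and let $C=\operatorname{conv}\big(\alpha([0,2\pi])\cup\beta([0,2\pi])\cup\gamma([0,\pi])\big)$. Then the set of extreme points of $C$ is exactly $\alpha([0,2\pi])\cup\beta([0,2\pi])\cup\gamma([0,\pi])$, and every extreme point of $C$ is exposed.
   Context: An extreme point $p$ of $C$ is exposed if there is a supporting hyperplane $H$ of $C$ with $C\cap H=\{p\}$. *)

(* Defs.v *)
From Stdlib Require Import Reals.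
Open Scope R_scope.

Record R3 := mkR3 { px : R; py : R; pz : R }.

Definition r3add (u v : R3) : R3 := mkR3 (px u + px v) (py u + py v) (pz u + pz v).
Definition r3scale (t : R) (u : R3) : R3 := mkR3 (t * px u) (t * py u) (t * pz u).
Definition r3dot (u v : R3) : R := px u * px v + py u * py v + pz u * pz v.
Definition r3zero : R3 := mkR3 0 0 0.

Definition convex (K : R3 -> Prop) : Prop :=
  forall x y t, K x -> K y -> 0 <= t <= 1 ->
    K (r3add (r3scale t x) (r3scale (1 - t) y)).

Definition conv (S : R3 -> Prop) (p : R3) : Prop :=
  forall K, convex K -> (forall x, S x -> K x) -> K p.

Definition extreme_point (C : R3 -> Prop) (p : R3) : Prop :=
  C p /\ forall x y t, C x -> C y -> 0 < t < 1 ->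
    p = r3add (r3scale t x) (r3scale (1 - t) y) -> x = p /\ y = p.

Definition supporting_hyperplane (C : R3 -> Prop) (a : R3) (b : R) : Prop :=
  a <> r3zero /\ (forall x, C x -> r3dot a x <= b) /\
  (exists x, C x /\ r3dot a x = b).

Definition exposed_point (C : R3 -> Prop) (p : R3) : Prop :=
  extreme_point C p /\
  exists a b, supporting_hyperplane C a b /\
    forall x, (C x /\ r3dot a x = b) <-> x = p.

Definition alpha (t : R) : R3 := mkR3 (cos t) (sin t) 1.
Definition beta (t : R) : R3 := mkR3 (cos t) (sin t) (-1).
Definition gamma (t : R) : R3 :=
  mkR3 (2 * cos (2 * t) - 1) (2 * sin (2 * t))
       (9 / 8 * cos t - 1 / 8 * cos (3 * t)).

Definition curves (p : R3) : Prop :=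
  (exists t, 0 <= t <= 2 * PI /\ p = alpha t) \/
  (exists t, 0 <= t <= 2 * PI /\ p = beta t) \/
  (exists t, 0 <= t <= PI /\ p = gamma t).

(* Main.v *)
Require Import Defs.
From Stdlib Require Import Reals Lra Psatz.
Open Scope R_scope.

Lemma sq0 x y : x*x + y*y = 0 -> x = 0 /\ y = 0.
Proof. intros H. split; nra. Qed.

Definition gP (c s : R) : R3 := mkR3 (4*(c*c)-3) (4*c*s) (3/2*c - 1/2*(c*c*c)).

Definition curvesP (q : R3) : Prop :=
  (exists c s, c*c+s*s=1 /\ q = mkR3 c s 1) \/
  (exists c s, c*c+s*s=1 /\ q = mkR3 c s (-1)) \/
  (exists c s, c*c+s*s=1 /\ 0 <= s /\ q = gP c s).

Definition sep (p : R3) : Prop := exists a, a <> r3zero /\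
  forall q, curvesP q -> r3dot a q <= r3dot a p /\ (r3dot a q = r3dot a p -> q = p).

Lemma cs1 t : cos t * cos t + sin t * sin t = 1.
Proof. pose proof (sin2_cos2 t). unfold Rsqr in H. lra. Qed.

Lemma gamma_eq t : gamma t = gP (cos t) (sin t).
Proof.
  unfold gamma, gP. pose proof (cs1 t).
  replace (3*t) with (2*t+t) by ring.
  rewrite cos_plus. rewrite !cos_2a_cos, sin_2a.
  assert (E : sin t * sin t = 1 - cos t * cos t) by lra.
  f_equal; [ring|ring|].
  replace (2 * sin t * cos t * sin t) with (2*cos t*(sin t*sin t)) by ring.
  rewrite E. field.
Qed.

Lemma curves_P q : curves q -> curvesP q.
Proof.
  intros [[t [_ ->]]|[[t [_ ->]]|[t [Ht ->]]]].
  - left. exists (cos t), (sin t). split; [apply cs1|reflexivity].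
  - right; left. exists (cos t), (sin t). split; [apply cs1|reflexivity].
  - right; right. exists (cos t), (sin t). split; [apply cs1|].
    split; [apply sin_ge_0; lra| apply gamma_eq].
Qed.
Lemma coreA u v c s : u*u+v*v=1 -> c*c+s*s=1 -> u<1 ->
  (1-u)*(u*(4*(c*c)-3) + v*(4*c*s)) + 3200*(3/2*c - 1/2*(c*c*c)) < (1-u) + 3200.
Proof.
  intros Huv Hcs Hu. set (m := 1-u).
  assert (Hm : 0 < m) by (unfold m; lra).
  assert (Hv2 : v*v = m*(2-m)) by (unfold m; nra).
  assert (Hu1 : -1 <= u) by nra.
  assert (Hc : c*c <= 1) by nra.
  assert (Hc1 : -1 <= c <= 1) by (split; nra).
  assert (h1 : 4*m*v*c*s <= m*m/2 + 8*(v*v)*(c*c)*(s*s)) by (pose proof (pow2_ge_0 (m - 4*v*c*s)); nra).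
  assert (h2 : 8*(v*v)*(c*c)*(s*s) <= 16*m*(s*s)).
  { rewrite Hv2. assert (0 <= s*s) by nra. assert (0 <= m*(s*s)) by nra.
    assert (m*(2-m)*(c*c) <= 2*m) by nra. nra. }
  assert (h3 : 20*m*(s*s) <= m*m/4 + 400*((s*s)*(s*s))) by (pose proof (pow2_ge_0 (m/2 - 20*(s*s))); nra).
  assert (h4 : (s*s)*(s*s) <= 4*((1-c)*(1-c)*(2+c))).
  { assert (E: s*s = (1-c)*(1+c)) by nra. rewrite E.
    assert (0 <= (1-c)*(1-c)) by nra. 
    assert ((1+c)*(1+c) <= 4) by nra. nra. }
  assert (h5 : 4*u*m*(s*s) >= -4*m*(s*s)) by nra.
  assert (E2 : 1 - (3/2*c - 1/2*(c*c*c)) = (1-c)*(1-c)*(2+c)/2) by field.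
  assert (E3 : u*(4*(c*c)-3) = u - 4*u*(s*s)) by nra.
  assert (Hmm : 0 < m*m) by nra.
  assert (0 <= (1-c)*(1-c)*(2+c)) by nra.
  replace u with (1-m) in * by (unfold m; ring).
  nra.
Qed.

Lemma cauchy u v c s : u*u+v*v=1 -> c*c+s*s=1 -> u*c+v*s <= 1.
Proof. intros. pose proof (pow2_ge_0 (c-u)). pose proof (pow2_ge_0 (s-v)). nra. Qed.

Lemma cauchy_eq u v c s : u*u+v*v=1 -> c*c+s*s=1 -> u*c+v*s = 1 -> c = u /\ s = v.
Proof. intros. destruct (sq0 (c-u) (s-v)) as [h1 h2]; [nra|]. lra. Qed.

Lemma sepA u v : u*u+v*v=1 -> u<1 -> sep (mkR3 u v 1).
Proof.
  intros Huv Hu. exists (mkR3 ((1-u)*u) ((1-u)*v) 3200). split.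
  { intro H. injection H. lra. }
  intros q [[c [s [Hcs ->]]]|[[c [s [Hcs ->]]]|[c [s [Hcs [Hs ->]]]]]];
    unfold r3dot; simpl.
  - pose proof (cauchy u v c s Huv Hcs). split; [nra|].
    intro E. assert (u*c+v*s = 1).
    { apply (Rmult_eq_reg_l (1-u)); [|lra]. nra. }
    destruct (cauchy_eq u v c s Huv Hcs H0) as [-> ->]. reflexivity.
  - pose proof (cauchy u v c s Huv Hcs). split; [nra|]. intro; nra.
  - pose proof (coreA u v c s Huv Hcs Hu). split; [nra|]. intro; nra.
Qed.

Lemma sepB u v : u*u+v*v=1 -> u<1 -> sep (mkR3 u v (-1)).
Proof.
  intros Huv Hu. exists (mkR3 ((1-u)*u) ((1-u)*v) (-3200)). split.
  { intro H. injection H. lra. }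
  intros q [[c [s [Hcs ->]]]|[[c [s [Hcs ->]]]|[c [s [Hcs [Hs ->]]]]]];
    unfold r3dot; simpl.
  - pose proof (cauchy u v c s Huv Hcs). split; [nra|]. intro; nra.
  - pose proof (cauchy u v c s Huv Hcs). split; [nra|].
    intro E. assert (u*c+v*s = 1).
    { apply (Rmult_eq_reg_l (1-u)); [|lra]. nra. }
    destruct (cauchy_eq u v c s Huv Hcs H0) as [-> ->]. reflexivity.
  - pose proof (coreA u v (-c) (-s) Huv ltac:(nra) Hu). split; [nra|]. intro; nra.
Qed.

Lemma sepA1 : sep (mkR3 1 0 1).
Proof.
  exists (mkR3 1 0 1). split.
  { intro H. injection H. lra. }
  intros q [[c [s [Hcs ->]]]|[[c [s [Hcs ->]]]|[c [s [Hcs [Hs ->]]]]]];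
    unfold r3dot; simpl.
  - assert (c <= 1) by nra. split; [lra|]. intro E.
    assert (c = 1) by lra. subst. assert (s = 0) by nra. subst. reflexivity.
  - assert (c <= 1) by nra. split; [lra|]. intro E. lra.
  - assert (-1 <= c <= 1) by (split; nra).
    assert (0 <= (1-c)*(1-c)*(2+c)) by nra.
    assert (E2 : 1 - (3/2*c - 1/2*(c*c*c)) = (1-c)*(1-c)*(2+c)/2) by field.
    split; [nra|]. intro E.
    assert (s = 0) by nra. subst. assert (c*c = 1) by lra.
    assert (c = 1) by nra. subst. unfold gP. f_equal; field.
Qed.

Lemma sepB1 : sep (mkR3 1 0 (-1)).
Proof.
  exists (mkR3 1 0 (-1)). split.
  { intro H. injection H. lra. }
  intros q [[c [s [Hcs ->]]]|[[c [s [Hcs ->]]]|[c [s [Hcs [Hs ->]]]]]];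
    unfold r3dot; simpl.
  - assert (c <= 1) by nra. split; [lra|]. intro E. lra.
  - assert (c <= 1) by nra. split; [lra|]. intro E.
    assert (c = 1) by lra. subst. assert (s = 0) by nra. subst. reflexivity.
  - assert (-1 <= c <= 1) by (split; nra).
    assert (0 <= (1+c)*(1+c)*(2-c)) by nra.
    assert (E2 : 1 + (3/2*c - 1/2*(c*c*c)) = (1+c)*(1+c)*(2-c)/2) by field.
    split; [nra|]. intro E.
    assert (s = 0) by nra. subst. assert (c*c = 1) by lra.
    assert (c = -1) by nra. subst. unfold gP. f_equal; field.
Qed.

Lemma sepG c0 s0 : c0*c0+s0*s0=1 -> 0 < s0 -> sep (gP c0 s0).
Proof.
  intros H0 Hs0. exists (mkR3 (2*c0*c0-1) (2*s0*c0) 0). split.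
  { intro H. injection H. intros. nra. }
  assert (HU : (2*c0*c0-1)*(2*c0*c0-1) + (2*s0*c0)*(2*s0*c0) = 1) by nra.
  assert (Hp : r3dot (mkR3 (2*c0*c0-1) (2*s0*c0) 0) (gP c0 s0) = 3 - 2*c0*c0).
  { unfold r3dot, gP; simpl. nra. }
  rewrite Hp.
  assert (Hc0 : c0*c0 < 1) by nra.
  intros q [[c [s [Hcs ->]]]|[[c [s [Hcs ->]]]|[c [s [Hcs [Hs ->]]]]]].
  - unfold r3dot; simpl. pose proof (cauchy _ _ c s HU Hcs). split; [lra|]. intro; lra.
  - unfold r3dot; simpl. pose proof (cauchy _ _ c s HU Hcs). split; [lra|]. intro; lra.
  - unfold r3dot, gP; simpl.
    assert (HC : (2*c*c-1)*(2*c*c-1) + (2*c*s)*(2*c*s) = 1) by nra.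
    pose proof (cauchy _ _ _ _ HU HC).
    assert (Ed : (2 * c0 * c0 - 1) * (4 * (c * c) - 3) + 2 * s0 * c0 * (4 * c * s) +
       0 * (3 / 2 * c - 1 / 2 * (c * c * c)) =
       2*((2*c0*c0-1)*(2*c*c-1) + (2*s0*c0)*(2*c*s)) - (2*c0*c0-1)) by field.
    rewrite Ed. split; [lra|]. intro E.
    destruct (cauchy_eq _ _ _ _ HU HC ltac:(lra)) as [h1 h2].
    assert (Ecc : c*c = c0*c0) by lra.
    assert (Ess : s*s = s0*s0) by lra.
    assert (s = s0) by nra. subst s.
    assert (c = c0) by nra. subst c. reflexivity.
Qed.

Lemma sep_curves p : curvesP p -> sep p.
Proof.
  intros [[c [s [Hcs ->]]]|[[c [s [Hcs ->]]]|[c [s [Hcs [Hs ->]]]]]].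
  - destruct (Rlt_or_le c 1) as [h|h]. { apply sepA; lra. }
    assert (c = 1) by nra. subst. assert (s = 0) by nra. subst. apply sepA1.
  - destruct (Rlt_or_le c 1) as [h|h]. { apply sepB; lra. }
    assert (c = 1) by nra. subst. assert (s = 0) by nra. subst. apply sepB1.
  - destruct (Rlt_or_le 0 s) as [h|h]. { apply sepG; lra. }
    assert (s = 0) by lra. subst. assert (c = 1 \/ c = -1) by (apply Rsqr_eq; unfold Rsqr; lra).
    destruct H as [->| ->].
    + replace (gP 1 0) with (mkR3 1 0 1) by (unfold gP; f_equal; field). apply sepA1.
    + replace (gP (-1) 0) with (mkR3 1 0 (-1)) by (unfold gP; f_equal; field). apply sepB1.
Qed.

Lemma conv_incl S x : S x -> conv S x.
Proof. intros Hx K _ HK. auto. Qed.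

Lemma conv_convex S : convex (conv S).
Proof. intros x y t Hx Hy Ht K HK HS. apply HK; [apply Hx|apply Hy|]; auto. Qed.

Lemma comb_same t x : r3add (r3scale t x) (r3scale (1-t) x) = x.
Proof. destruct x; unfold r3add, r3scale; simpl; f_equal; ring. Qed.

Lemma comb_0 x y : r3add (r3scale 0 x) (r3scale (1-0) y) = y.
Proof. destruct y; unfold r3add, r3scale; simpl; f_equal; ring. Qed.

Lemma comb_1 x y : r3add (r3scale 1 x) (r3scale (1-1) y) = x.
Proof. destruct x; unfold r3add, r3scale; simpl; f_equal; ring. Qed.

Lemma dot_comb a x y t : r3dot a (r3add (r3scale t x) (r3scale (1-t) y)) =
  t * r3dot a x + (1-t) * r3dot a y.
Proof. unfold r3dot, r3add, r3scale; simpl; ring. Qed.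

Lemma exposed_of_sep (S : R3 -> Prop) a p : S p -> a <> r3zero ->
  (forall q, S q -> r3dot a q <= r3dot a p /\ (r3dot a q = r3dot a p -> q = p)) ->
  exposed_point (conv S) p.
Proof.
  intros Sp Ha Hq.
  set (b := r3dot a p).
  assert (Hle : forall x, conv S x -> r3dot a x <= b).
  { intros x Hx. apply (Hx (fun x => r3dot a x <= b)).
    - intros x1 y1 t H1 H2 Ht. rewrite dot_comb. nra.
    - intros q Sq. apply Hq; auto. }
  assert (Heq : forall x, conv S x -> r3dot a x = b -> x = p).
  { intros x Hx. apply (Hx (fun x => r3dot a x <= b /\ (r3dot a x = b -> x = p))).
    - intros x1 y1 t [H1 E1] [H2 E2] Ht. rewrite dot_comb. split; [nra|].
      intro E.
      destruct (Req_dec t 0) as [->|h0].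
      { rewrite comb_0. apply E2. lra. }
      destruct (Req_dec t 1) as [->|h1].
      { rewrite comb_1. apply E1. lra. }
      assert (r3dot a x1 = b) by nra. assert (r3dot a y1 = b) by nra.
      rewrite E1, E2 by auto. apply comb_same.
    - intros q Sq. apply Hq; auto. }
  split.
  - split; [apply conv_incl; auto|].
    intros x y t Hx Hy Ht E.
    pose proof (Hle x Hx). pose proof (Hle y Hy).
    assert (Hd : b = t * r3dot a x + (1-t) * r3dot a y) by (unfold b; rewrite E at 1; apply dot_comb).
    split; apply Heq; auto; nra.
  - exists a, b. split.
    + split; [auto|]. split; [auto|]. exists p. split; [apply conv_incl; auto|reflexivity].
    + intros x; split.
      * intros [Hx E]. apply Heq; auto.
      * intros ->. split; [apply conv_incl; auto|reflexivity].
Qed.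

From Stdlib Require Import Classical.

Lemma extreme_in (S : R3 -> Prop) p : extreme_point (conv S) p -> S p.
Proof.
  intros [Hp Hext]. apply NNPP. intro nS.
  assert (H : conv S p /\ p <> p).
  { apply (Hp (fun x => conv S x /\ x <> p)).
    - intros x y t [Hx nx] [Hy ny] Ht. split; [apply conv_convex; auto|].
      intro E.
      destruct (Req_dec t 0) as [->|h0].
      { rewrite comb_0 in E. auto. }
      destruct (Req_dec t 1) as [->|h1].
      { rewrite comb_1 in E. auto. }
      destruct (Hext x y t Hx Hy ltac:(lra) (eq_sym E)). auto.
    - intros x Sx. split; [apply conv_incl; auto|]. intro; subst; auto. }
  destruct H; auto.
Qed.

Theorem proposition5p4 :
  (forall p, extreme_point (conv curves) p <-> curves p) /\
  (forall p, extreme_point (conv curves) p -> exposed_point (conv curves) p).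
Proof.
  assert (Hexp : forall p, curves p -> exposed_point (conv curves) p).
  { intros p Hp. destruct (sep_curves p (curves_P p Hp)) as [a [Ha Hq]].
    apply (exposed_of_sep curves a p Hp Ha). intros q Sq. apply Hq, curves_P, Sq. }
  split.
  - intro p; split.
    + apply extreme_in.
    + intro Hp. apply (Hexp p Hp).
  - intros p Hp. apply Hexp, extreme_in, Hp.
Qed.
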